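(* Let $X,Z\in\mathbb{R}^{n\times r}$ with $XX^{T}\ne ZZ^{T}$. Let $Z_{\perp}=(I-XX^{\dagger})Z$, $$\alpha=\frac{\|Z_{\perp}Z_{\perp}^{T}\|_{F}}{\|XX^{T}-ZZ^{T}\|_{F}},\qquad\beta=\frac{\sigma_{\min}^{2}(X)}{\|XX^{T}-ZZ^{T}\|_{F}}\cdot\frac{\mathrm{tr}(Z_{\perp}Z_{\perp}^{T})}{\|Z_{\perp}Z_{\perp}^{T}\|_{F}},$$ and for $t\ge0$ let $$\psi(\alpha,\beta,t)=\begin{cases}(t/\beta)\alpha+\sqrt{1-(t/\beta)^{2}}\sqrt{1-\alpha^{2}} & \text{if }t/\beta\le\alpha,\\ 1 & \text{if }t/\beta>\alpha.\end{cases}$$ If $\beta>0$, then $\cos\theta(t)\ge\psi(\alpha,\beta,t)$ for all $t\ge0$.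
   Context: $\mathbf{e}=\mathrm{vec}(XX^{T}-ZZ^{T})\in\mathbb{R}^{n^{2}}$ (column-stacking) and $\mathbf{J}\in\mathbb{R}^{n^{2}\times nr}$ satisfies $\mathbf{J}\,\mathrm{vec}(Y)=\mathrm{vec}(XY^{T}+YX^{T})$ for all $Y\in\mathbb{R}^{n\times r}$. For $t\ge0$, $\cos\theta(t)$ is the maximum of $\frac{\mathbf{e}^{T}[\mathbf{J}y-w]}{\|\mathbf{e}\|\|\mathbf{J}y-w\|}$ over $y\in\mathbb{R}^{nr}$ and $W_{i,j}\in\mathbb{R}^{n\times n}$ ($i,j=1,\dots,r$) subject to $\frac{\langle\mathbf{J}^{T}\mathbf{J},W\rangle}{\|\mathbf{e}\|\|\mathbf{J}y-w\|}=2t$ and $W\succeq0$, where $W=[W_{i,j}]_{i,j=1}^{r}$ and $w=\sum_{i=1}^{r}\mathrm{vec}(W_{i,i})$. $A^{\dagger}$ is the pseudoinverse and $\sigma_{\min}(X)$ the $r$-th singular value of $X$. *)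

(* Defs.v *)
From HB Require Import structures.
From mathcomp Require Import all_boot all_order all_algebra.
From mathcomp Require Import classical_sets reals constructive_ereal ereal.
Set Implicit Arguments. Unset Strict Implicit. Unset Printing Implicit Defensive.
Import Order.TTheory GRing.Theory Num.Theory.
Local Open Scope ring_scope.
Local Open Scope classical_set_scope.

Section Defs.
Variable R : realType.

(* column-stacking vectorisation: entry (i,j) of A sits at index j*m + i *)
Definition vec m k (A : 'M[R]_(m, k)) : 'cV[R]_(k * m) := (mxvec A^T)^T.

Definition frob m k (A : 'M[R]_(m, k)) : R :=
  Num.sqrt (\sum_(i < m) \sum_(j < k) A i j ^+ 2).

Definition finner m (A B : 'M[R]_m) : R := \tr (A^T *m B).

Definition dotv p (u v : 'cV[R]_p) : R := (u^T *m v) 0 0.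

Definition psd p (W : 'M[R]_p) : Prop :=
  W^T = W /\ forall v : 'cV[R]_p, 0 <= (v^T *m W *m v) 0 0.

Definition is_pinv m k (A : 'M[R]_(m, k)) (Ad : 'M[R]_(k, m)) : Prop :=
  [/\ A *m Ad *m A = A, Ad *m A *m Ad = Ad,
      (A *m Ad)^T = A *m Ad & (Ad *m A)^T = Ad *m A].

(* s = sigma_min(X)^2 where sigma_min(X) is the r-th singular value of
   X : n x r, i.e. s is the smallest eigenvalue of X^T X. *)
Definition is_sigma_min_sq n r (X : 'M[R]_(n, r)) (s : R) : Prop :=
  eigenvalue (X^T *m X) s /\ forall l, eigenvalue (X^T *m X) l -> s <= l.

(* diagonal block W_{i,i} (n x n) of W = [W_{i,j}]_{i,j=1..r} *)
Definition diag_blk n r (W : 'M[R]_(r * n)) (i : 'I_r) : 'M[R]_n :=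
  \matrix_(a < n, b < n) W (mxvec_index i a) (mxvec_index i b).

Definition wvec n r (W : 'M[R]_(r * n)) : 'cV[R]_(n * n) :=
  \sum_(i < r) vec (diag_blk W i).

Definition cos_theta n r (X Z : 'M[R]_(n, r)) (J : 'M[R]_(n * n, r * n)) (t : R)
  : \bar R :=
  let e := vec (X *m X^T - Z *m Z^T) in
  ereal_sup [set c%:E | c in
    [set c : R | exists (y : 'cV[R]_(r * n)) (W : 'M[R]_(r * n)),
       let v := J *m y - wvec W in
       [/\ psd W, v != 0,
           finner (J^T *m J) W / (frob e * frob v) = 2 * t &
           c = dotv e v / (frob e * frob v)]]].

Definition psi (alpha beta t : R) : R :=
  if t / beta <= alpha then
    (t / beta) * alpha + Num.sqrt (1 - (t / beta) ^+ 2) * Num.sqrt (1 - alpha ^+ 2)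
  else 1.

End Defs.

(* Main.v *)
Require Import Defs.
From HB Require Import structures.
From mathcomp Require Import all_boot all_order all_algebra.
From mathcomp Require Import classical_sets reals constructive_ereal ereal.
From mathcomp Require Import ring lra.
Import Order.TTheory GRing.Theory Num.Theory.
Local Open Scope ring_scope.

Module Aux.
Set Implicit Arguments. Unset Strict Implicit. Unset Printing Implicit Defensive.


Section Aux.
Variable R : realType.

Lemma mul_self_ge0 (x : R) : 0 <= x * x.
Proof. by rewrite -expr2 sqr_ge0. Qed.

Definition ip m k (A B : 'M[R]_(m, k)) : R := \tr (A^T *m B).

Lemma ipE m k (A B : 'M[R]_(m, k)) : ip A B = \sum_(i < m) \sum_(j < k) A i j * B i j.
Proof.
rewrite /ip /mxtrace exchange_big; apply: eq_bigr => j _.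
by rewrite mxE; apply: eq_bigr => i _; rewrite mxE.
Qed.

Lemma ipC m k (A B : 'M[R]_(m, k)) : ip A B = ip B A.
Proof. by rewrite !ipE; apply: eq_bigr => i _; apply: eq_bigr => j _; rewrite mulrC. Qed.

Lemma ip_ge0 m k (A : 'M[R]_(m, k)) : 0 <= ip A A.
Proof. by rewrite ipE; do 2!apply: sumr_ge0 => ? _; rewrite -expr2 sqr_ge0. Qed.

Lemma ip_eq0 m k (A : 'M[R]_(m, k)) : ip A A = 0 -> A = 0.
Proof.
rewrite ipE => /psumr_eq0P H; apply/matrixP => i j; rewrite mxE.
have /psumr_eq0P H2 := H (fun l _ => sumr_ge0 _ (fun l' _ => mul_self_ge0 _)) i isT.
have := H2 (fun l _ => mul_self_ge0 _) j isT; rewrite -expr2 => /eqP; rewrite sqrf_eq0 => /eqP; apply.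
Qed.

Lemma ipDl m k (A B C : 'M[R]_(m, k)) : ip (A + B) C = ip A C + ip B C.
Proof. by rewrite /ip linearD /= mulmxDl mxtraceD. Qed.
Lemma ipDr m k (A B C : 'M[R]_(m, k)) : ip C (A + B) = ip C A + ip C B.
Proof. by rewrite /ip mulmxDr mxtraceD. Qed.
Lemma ipZl m k a (A C : 'M[R]_(m, k)) : ip (a *: A) C = a * ip A C.
Proof. by rewrite /ip linearZ /= -scalemxAl mxtraceZ. Qed.
Lemma ipZr m k a (A C : 'M[R]_(m, k)) : ip C (a *: A) = a * ip C A.
Proof. by rewrite /ip -scalemxAr mxtraceZ. Qed.
Lemma ipNl m k (A C : 'M[R]_(m, k)) : ip (- A) C = - ip A C.
Proof. by rewrite -scaleN1r ipZl mulN1r. Qed.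
Lemma ipNr m k (A C : 'M[R]_(m, k)) : ip C (- A) = - ip C A.
Proof. by rewrite -scaleN1r ipZr mulN1r. Qed.
Lemma ipBl m k (A B C : 'M[R]_(m, k)) : ip (A - B) C = ip A C - ip B C.
Proof. by rewrite ipDl ipNl. Qed.
Lemma ipBr m k (A B C : 'M[R]_(m, k)) : ip C (A - B) = ip C A - ip C B.
Proof. by rewrite ipDr ipNr. Qed.
Lemma ip0l m k (C : 'M[R]_(m, k)) : ip 0 C = 0.
Proof. by rewrite /ip linear0 mul0mx mxtrace0. Qed.
Lemma ip0r m k (C : 'M[R]_(m, k)) : ip C 0 = 0.
Proof. by rewrite /ip mulmx0 mxtrace0. Qed.

Lemma ip_mull m k l (A : 'M[R]_(m, k)) (B : 'M[R]_(k, l)) C :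
  ip (A *m B) C = ip B (A^T *m C).
Proof. by rewrite /ip trmx_mul mulmxA. Qed.

Lemma ip_mulr m k l (A : 'M[R]_(m, k)) (B : 'M[R]_(k, l)) C :
  ip (A *m B) C = ip A (C *m B^T).
Proof.
rewrite /ip trmx_mul -mulmxA mxtrace_mulC mulmxA; congr (\tr _).
Qed.

Lemma ip_outer m k (a c : 'cV[R]_m) (b d : 'cV[R]_k) :
  ip (a *m b^T) (c *m d^T) = ip a c * ip b d.
Proof.
rewrite !ipE big_distrl; apply: eq_bigr => i _ /=.
rewrite big_ord1 big_distrr; apply: eq_bigr => j _ /=.
rewrite big_ord1 !mxE !big_ord1 !mxE; ring.
Qed.

Lemma frob_ip m k (A : 'M[R]_(m, k)) : frob A = Num.sqrt (ip A A).
Proof. by rewrite /frob ipE; congr Num.sqrt; do 2!apply: eq_bigr => ? _; rewrite expr2. Qed.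

Lemma dotv_ip p (u v : 'cV[R]_p) : dotv u v = ip u v.
Proof. by rewrite /dotv /ip /mxtrace big_ord1. Qed.

Lemma vec_ip m k (A B : 'M[R]_(m, k)) : ip (vec A) (vec B) = ip A B.
Proof.
rewrite ipE [RHS]ipE exchange_big big_ord1 /= [RHS]exchange_big /=.
rewrite (reindex _ (curry_mxvec_bij _ _)) /= [RHS]pair_bigA /=.
by apply: eq_bigr => [[j i]] _ /=; rewrite /vec !mxE !mxvecE !mxE.
Qed.

Lemma frob_vec m k (A : 'M[R]_(m, k)) : frob (vec A) = frob A.
Proof. by rewrite !frob_ip vec_ip. Qed.

Lemma vecD m k (A B : 'M[R]_(m, k)) : vec (A + B) = vec A + vec B.
Proof. by rewrite /vec !linearD. Qed.
Lemma vecZ m k a (A : 'M[R]_(m, k)) : vec (a *: A) = a *: vec A.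
Proof. by rewrite /vec !linearZ. Qed.
Lemma vec0 m k : vec (0 : 'M[R]_(m, k)) = 0.
Proof. by rewrite /vec !linear0. Qed.
Lemma vecN m k (A : 'M[R]_(m, k)) : vec (- A) = - vec A.
Proof. by rewrite /vec !linearN. Qed.
Lemma vecB m k (A B : 'M[R]_(m, k)) : vec (A - B) = vec A - vec B.
Proof. by rewrite vecD vecN. Qed.

End Aux.


Section Aux2.
Variable R : realType.

Definition W1 n r (V : 'M[R]_(n, r)) : 'M[R]_(r * n) := vec V *m (vec V)^T.

Lemma psd_W1 n r (V : 'M[R]_(n, r)) : psd (W1 V).
Proof.
split; first by rewrite /W1 trmx_mul trmxK.
move=> v; rewrite /W1.
have -> : v^T *m (vec V *m (vec V)^T) *m v = (v^T *m vec V) *m (v^T *m vec V)^T.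
  by rewrite trmx_mul [(v^T)^T]trmxK !mulmxA.
set a := v^T *m vec V; rewrite mxE; apply: sumr_ge0 => i _; rewrite [a^T i 0]mxE; exact: mul_self_ge0.
Qed.

Lemma psd0 p : psd (0 : 'M[R]_p).
Proof. by split; [rewrite trmx0 | move=> v; rewrite mulmx0 mul0mx mxE]. Qed.

Lemma psdD p (A B : 'M[R]_p) : psd A -> psd B -> psd (A + B).
Proof.
move=> [hA pA] [hB pB]; split; first by rewrite linearD /= hA hB.
by move=> v; rewrite mulmxDr mulmxDl mxE addr_ge0.
Qed.

Lemma diag_blkD n r (A B : 'M[R]_(r * n)) i :
  diag_blk (A + B) i = diag_blk A i + diag_blk B i.
Proof. by apply/matrixP => a b; rewrite !mxE. Qed.
Lemma diag_blk0 n r i : diag_blk (0 : 'M[R]_(r * n)) i = 0.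
Proof. by apply/matrixP => a b; rewrite !mxE. Qed.

Lemma wvecD n r (A B : 'M[R]_(r * n)) : wvec (A + B) = wvec A + wvec B.
Proof.
rewrite /wvec -big_split /=; apply: eq_bigr => i _.
by rewrite diag_blkD vecD.
Qed.
Lemma wvec0 n r : wvec (0 : 'M[R]_(r * n)) = 0.
Proof. by rewrite /wvec big1 // => i _; rewrite diag_blk0 vec0. Qed.

Lemma wvec_sum n r I (s : seq I) (F : I -> 'M[R]_(r * n)) :
  wvec (\sum_(i <- s) F i) = \sum_(i <- s) wvec (F i).
Proof. exact: (big_morph _ (@wvecD n r) (@wvec0 n r)). Qed.

Lemma vec_sum m k I (s : seq I) (F : I -> 'M[R]_(m, k)) :
  vec (\sum_(i <- s) F i) = \sum_(i <- s) vec (F i).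
Proof. exact: (big_morph _ (@vecD R m k) (@vec0 R m k)). Qed.

Lemma wvec_W1 n r (V : 'M[R]_(n, r)) : wvec (W1 V) = vec (V *m V^T).
Proof.
rewrite /wvec -vec_sum; congr vec; apply/matrixP => a b.
rewrite summxE mxE; apply: eq_bigr => i _.
by rewrite !mxE big_ord1 /vec !mxE !mxvecE !mxE.
Qed.

Lemma finnerD p (M A B : 'M[R]_p) : finner M (A + B) = finner M A + finner M B.
Proof. by rewrite /finner mulmxDr mxtraceD. Qed.
Lemma finner0 p (M : 'M[R]_p) : finner M 0 = 0.
Proof. by rewrite /finner mulmx0 mxtrace0. Qed.
Lemma finner_sum p (M : 'M[R]_p) I (s : seq I) (F : I -> 'M[R]_p) :
  finner M (\sum_(i <- s) F i) = \sum_(i <- s) finner M (F i).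
Proof. exact: (big_morph _ (@finnerD p M) (@finner0 p M)). Qed.

Lemma finner_W1 n r q (J : 'M[R]_(q, r * n)) (V : 'M[R]_(n, r)) :
  finner (J^T *m J) (W1 V) = ip (J *m vec V) (J *m vec V).
Proof.
rewrite /finner /W1 /ip trmx_mul trmxK mulmxA mxtrace_mulC trmx_mul.
by rewrite !mulmxA.
Qed.

End Aux2.


Section Pinv.
Variable R : realType.

Lemma tangent_gen n r (X : 'M[R]_(n, r)) (Xd : 'M[R]_(r, n)) (T P Q : 'M[R]_n) : X *m Xd = P -> P^T = P -> Q^T = Q ->
  P *m P = P -> P + Q = 1%:M -> T^T = T -> Q *m T *m Q = 0 ->
  let Y := (2^-1 *: (P *m T *m P) + Q *m T *m P) *m Xd^T in
  X *m Y^T + Y *m X^T = T.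
Proof.
move=> eP hPT hQT hPP hPQ1 hT hQ Y.
set a := P *m T *m P; set b := P *m T *m Q; set c := Q *m T *m P.
have eT : T = a + b + c.
  have -> : T = (P + Q) *m T *m (P + Q) by rewrite hPQ1 mul1mx mulmx1.
  rewrite mulmxDl !mulmxDr !mulmxDl hQ addr0 -/a -/b -/c; by rewrite -addrA [c + b]addrC addrA.
have e1 : X *m Y^T = 2^-1 *: a + b.
  rewrite /Y trmx_mul trmxK mulmxA eP linearD /= linearZ /= !trmx_mul hPT hQT hT.
  by rewrite mulmxDr -scalemxAr !mulmxA hPP.
have e2 : Y *m X^T = 2^-1 *: a + c.
  rewrite /Y -mulmxA -trmx_mul eP hPT mulmxDl -scalemxAl.
  by rewrite /a /c -!mulmxA hPP.
rewrite e1 e2 [in RHS]eT.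
have h : (2^-1 + 2^-1 : R) = 1 by lra.
by rewrite addrACA -scalerDl h scale1r addrA.
Qed.

Variables (n r : nat) (X : 'M[R]_(n, r)) (Xd : 'M[R]_(r, n)).
Hypothesis hp : is_pinv X Xd.

Local Notation P := (X *m Xd).
Local Notation Q := (1%:M - X *m Xd).

Lemma PT : P^T = P. Proof. by case: hp. Qed.
Lemma PX : P *m X = X. Proof. by case: hp. Qed.
Lemma PP : P *m P = P. Proof. by rewrite mulmxA PX. Qed.
Lemma QT : Q^T = Q. Proof. by rewrite linearB /= trmx1 PT. Qed.
Lemma QX : Q *m X = 0. Proof. by rewrite mulmxBl mul1mx PX subrr. Qed.
Lemma XtQ : X^T *m Q = 0. Proof. by rewrite -QT -trmx_mul QX trmx0. Qed.
Lemma PQ : P *m Q = 0. Proof. by rewrite mulmxBr mulmx1 PP subrr. Qed.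
Lemma QP : Q *m P = 0. Proof. by rewrite mulmxBl mul1mx PP subrr. Qed.
Lemma QQ : Q *m Q = Q. Proof. by rewrite mulmxBl mul1mx PQ subr0. Qed.
Lemma PQ1 : P + Q = 1%:M. Proof. by rewrite addrC subrK. Qed.

End Pinv.


Section Eig.
Variable R : realType.

Lemma ip_tr m k (A B : 'M[R]_(m, k)) : ip A^T B^T = ip A B.
Proof. by rewrite /ip !trmxK mxtrace_mulC -mxtrace_tr trmx_mul trmxK. Qed.

Lemma eigvec n r (X : 'M[R]_(n, r)) s : is_sigma_min_sq X s ->
  exists u : 'cV[R]_r, ip u u = 1 /\ X^T *m X *m u = s *: u.
Proof.
case=> /eigenvalueP [v hv hv0] _.
set c := ip v v.
have c0 : 0 < c.
  rewrite lt0r ip_ge0 andbT; apply/eqP => /ip_eq0 h; by rewrite h eqxx in hv0.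
exists ((Num.sqrt c)^-1 *: v^T); split.
  rewrite ipZl ipZr ip_tr -/c mulrA -expr2 exprVn sqr_sqrtr ?mulVf //.
  by rewrite gt_eqF. by rewrite ltW.
rewrite -scalemxAr scalerA mulrC -scalerA; congr (_ *: _).
have -> : X^T *m X = (X^T *m X)^T by rewrite trmx_mul trmxK.
by rewrite -trmx_mul hv linearZ.
Qed.

Lemma mx11_ip (u : 'cV[R]_1) : True. Proof. by []. Qed.

Lemma utu r (u : 'cV[R]_r) : ip u u = 1 -> u^T *m u = 1%:M.
Proof.
move=> h; rewrite [LHS]mx11_scalar; congr (_%:M).
by move: h; rewrite /ip /mxtrace big_ord1.
Qed.

End Eig.


Section Main.
Variable R : realType.
Variables (n r : nat) (X Z : 'M[R]_(n, r)) (Xd : 'M[R]_(r, n))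
  (J : 'M[R]_(n * n, r * n)) (sg : R) (u : 'cV[R]_r).
Hypothesis hp : is_pinv X Xd.
Hypothesis hJ : forall Y : 'M[R]_(n, r), J *m vec Y = vec (X *m Y^T + Y *m X^T).
Hypothesis hu1 : ip u u = 1.
Hypothesis hu : X^T *m X *m u = sg *: u.

Local Notation Q := (1%:M - X *m Xd).
Local Notation Zp := (Q *m Z).
Local Notation N := (Zp *m Zp^T).
Local Notation a0 := (X *m u).
Local Notation G := (a0 *m a0^T).

Lemma XtZp : X^T *m Zp = 0.
Proof. by rewrite mulmxA XtQ // mul0mx. Qed.

Lemma ipa0 : ip a0 a0 = sg.
Proof. by rewrite ip_mull mulmxA hu ipZr hu1 mulr1. Qed.

Lemma Mform (y : 'cV[R]_n) c :
  X *m (c *: (y *m u^T))^T + (c *: (y *m u^T)) *m X^T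
  = c *: (a0 *m y^T + y *m a0^T).
Proof.
rewrite linearZ /= -scalemxAr -scalemxAl scalerDr; congr (_ *: _ + _ *: _).
  by rewrite trmx_mul trmxK mulmxA.
by rewrite trmx_mul mulmxA.
Qed.

Lemma ipM (y : 'cV[R]_n) : ip a0 y = 0 ->
  ip (a0 *m y^T + y *m a0^T) (a0 *m y^T + y *m a0^T) = 2 * sg * ip y y.
Proof.
move=> h0; rewrite !ipDl !ipDr !ip_outer ipa0 h0 ipC h0; ring.
Qed.

Lemma ipMa0 :
  ip (a0 *m a0^T + a0 *m a0^T) (a0 *m a0^T + a0 *m a0^T) = 4 * sg ^+ 2.
Proof. by rewrite !ipDl !ipDr !ip_outer ipa0; ring. Qed.

Lemma VVt (y : 'cV[R]_n) c :
  (c *: (y *m u^T)) *m (c *: (y *m u^T))^T = c ^+ 2 *: (y *m y^T).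
Proof.
rewrite linearZ /= -scalemxAr -scalemxAl scalerA -expr2; congr (_ *: _).
by rewrite trmx_mul trmxK mulmxA -[y *m u^T *m u]mulmxA utu // mulmx1.
Qed.

Lemma sum_cols : \sum_(j < r) col j Zp *m (col j Zp)^T = N.
Proof.
apply/matrixP => a b; rewrite summxE mxE; apply: eq_bigr => j _.
by rewrite mxE big_ord1 !mxE.
Qed.

Lemma sum_ip_cols : \sum_(j < r) ip (col j Zp) (col j Zp) = \tr N.
Proof.
have -> : \tr N = ip Zp Zp by rewrite mxtrace_mulC.
rewrite [RHS]ipE [in RHS]exchange_big /=.
apply: eq_bigr => j _; rewrite ipE; apply: eq_bigr => i _.
by rewrite big_ord1 !mxE.
Qed.

Lemma a0_col j : ip a0 (col j Zp) = 0.
Proof. by rewrite ip_mull colE mulmxA XtZp mul0mx ip0r. Qed.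

Lemma feas (T : 'M[R]_n) (q dl : R) : 0 <= q -> T^T = T -> Q *m T *m Q = 0 ->
  exists (y : 'cV[R]_(r * n)) (W : 'M[R]_(r * n)),
  [/\ psd W, J *m y - wvec W = vec (T - (q *: N + dl ^+ 2 *: G)) &
      finner (J^T *m J) W = 2 * sg * q * \tr N + 4 * sg ^+ 2 * dl ^+ 2].
Proof.
move=> q0 hT hQ.
have hY := tangent_gen (erefl (X *m Xd)) (PT hp) (QT hp) (PP hp) (PQ1 X Xd) hT hQ.
set Y := (_ *m Xd^T) in hY.
pose V j := Num.sqrt q *: (col j Zp *m u^T).
pose V0 := dl *: (a0 *m u^T).
exists (vec Y), (\sum_(j < r) W1 (V j) + W1 V0); split.
- apply: psdD; last exact: psd_W1.
  by apply: (big_ind (@psd R (r * n))); [exact: psd0 | exact: psdD | move=> j _; exact: psd_W1].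
- rewrite hJ hY wvecD wvec_sum vecB; congr (_ - _).
  rewrite vecD; congr (_ + _).
    rewrite -sum_cols scaler_sumr vec_sum; apply: eq_bigr => j _.
    by rewrite wvec_W1 /V VVt sqr_sqrtr.
  by rewrite wvec_W1 /V0 VVt.
- rewrite finnerD finner_sum !finner_W1 hJ vec_ip.
  rewrite /V0 Mform ipZl ipZr ipMa0.
  rewrite (eq_bigr (fun j => (2 * sg * q) * ip (col j Zp) (col j Zp))); last first.
    move=> j _; rewrite finner_W1 hJ vec_ip /V Mform ipZl ipZr ipM ?a0_col //.
    rewrite mulrA -expr2 sqr_sqrtr //; ring.
  rewrite -mulr_sumr sum_ip_cols; ring.
Qed.

Lemma reach (t : R) (T : 'M[R]_n) (q dl : R) : 0 <= q -> T^T = T -> Q *m T *m Q = 0 ->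
  let E := X *m X^T - Z *m Z^T in let D := T - (q *: N + dl ^+ 2 *: G) in
  D != 0 ->
  (2 * sg * q * \tr N + 4 * sg ^+ 2 * dl ^+ 2) /
     (Num.sqrt (ip E E) * Num.sqrt (ip D D)) = 2 * t ->
  ((ip E D / (Num.sqrt (ip E E) * Num.sqrt (ip D D)))%:E <= cos_theta X Z J t)%E.
Proof.
move=> q0 hT hQ E D hD hc.
have [y [W [hW hv hf]]] := feas dl q0 hT hQ.
rewrite /cos_theta /=; apply: ereal_sup_ubound.
exists (ip E D / (Num.sqrt (ip E E) * Num.sqrt (ip D D))) => //.
exists y, W; rewrite hv; split => //.
- apply/eqP => /(congr1 (fun v => ip v v)); rewrite vec_ip ip0l => /ip_eq0 h.
  by move: hD; rewrite /D h eqxx.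
- by rewrite hf !frob_vec !frob_ip.
- by rewrite dotv_ip vec_ip !frob_vec !frob_ip.
Qed.

End Main.

End Aux.
Import Aux.


Theorem lemma16 (R : realType) (n r : nat) (X Z : 'M[R]_(n, r))
  (Xd : 'M[R]_(r, n)) (J : 'M[R]_(n * n, r * n)) (smin2 : R) :
  X *m X^T != Z *m Z^T ->
  is_pinv X Xd ->
  (forall Y : 'M[R]_(n, r), J *m vec Y = vec (X *m Y^T + Y *m X^T)) ->
  is_sigma_min_sq X smin2 ->
  let Zp := (1%:M - X *m Xd) *m Z in
  let alpha := frob (Zp *m Zp^T) / frob (X *m X^T - Z *m Z^T) in
  let beta := smin2 / frob (X *m X^T - Z *m Z^T)
              * (\tr (Zp *m Zp^T) / frob (Zp *m Zp^T)) in
  0 < beta ->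
  forall t : R, 0 <= t -> ((psi alpha beta t)%:E <= cos_theta X Z J t)%E.
Proof.
move=> hne hp hJ hsig; cbv zeta.
have [u [hu1 hu]] := eigvec hsig.
set sg := smin2 in hu hsig *.
set Q := 1%:M - X *m Xd.
set Zp := Q *m Z.
set E := X *m X^T - Z *m Z^T.
set N := Zp *m Zp^T.
set ET := E + N.
set G := (X *m u) *m (X *m u)^T.
have QTe : Q^T = Q by exact: QT.
have QQe : Q *m Q = Q by exact: QQ.
have QXe : Q *m X = 0 by exact: QX.
have XtQe : X^T *m Q = 0 by exact: XtQ.
have eQ : Q = 1%:M - X *m Xd by [].
clearbody Q.
have QZp : Q *m Zp = Zp by rewrite /Zp mulmxA QQe.
have NT : N^T = N by rewrite /N trmx_mul trmxK.
have ET_T : E^T = E by rewrite /E linearB /= !trmx_mul !trmxK.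
have ETT : ET^T = ET by rewrite /ET linearD /= ET_T NT.
have QNQ : Q *m N *m Q = N.
  by rewrite /N mulmxA QZp -mulmxA -{1}QTe -trmx_mul QZp.
have QEQ : Q *m E *m Q = - N.
  rewrite /E mulmxBr mulmxBl !mulmxA QXe !mul0mx sub0r; congr (- _).
  by rewrite /N /Zp trmx_mul QTe !mulmxA.
have QETQ : Q *m ET *m Q = 0.
  by rewrite /ET mulmxDr mulmxDl QEQ QNQ addNr.
have ipNQ : forall M, ip N M = ip N (Q *m M *m Q).
  move=> M; rewrite -{1}QNQ ip_mulr ip_mull QTe !mulmxA //.
have QGQ : Q *m G *m Q = 0 by rewrite /G !mulmxA QXe !mul0mx.
have GT : G^T = G by rewrite /G trmx_mul trmxK.
have ipETN : ip ET N = 0 by rewrite ipC ipNQ QETQ ip0r.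
have ipGN : ip G N = 0 by rewrite ipC ipNQ QGQ ip0r.
set E2 := ip E E; set n2 := ip N N; set e2 := ip ET ET; set tau := \tr N.
have eE : E = ET - N by rewrite /ET addrK.
have hE2 : E2 = e2 + n2.
  by rewrite /E2 eE ipBl !ipBr ipETN ipC ipETN; ring.
have tau0 : 0 <= tau by rewrite /tau mxtrace_mulC; exact: ip_ge0.
have e20 : 0 <= e2 by exact: ip_ge0.
have n20 : 0 <= n2 by exact: ip_ge0.
have fE : frob E = Num.sqrt E2 by rewrite frob_ip.
have fN : frob N = Num.sqrt n2 by rewrite frob_ip.
rewrite fE fN -/tau => hb t ht.
set sE := Num.sqrt E2 in hb *; set sn := Num.sqrt n2 in hb *.
have sE0 : 0 <= sE by exact: sqrtr_ge0.
have sn0 : 0 <= sn by exact: sqrtr_ge0.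
have sE2 : sE ^+ 2 = E2 by rewrite sqr_sqrtr // hE2 addr_ge0.
have sn2 : sn ^+ 2 = n2 by rewrite sqr_sqrtr.
have sEn0 : sE != 0.
  by apply: contraTneq hb => ->; rewrite invr0 mulr0 mul0r ltxx.
have snn0 : sn != 0.
  by apply: contraTneq hb => ->; rewrite invr0 mulr0 mulr0 ltxx.
have sEp : 0 < sE by rewrite lt0r sEn0.
have snp : 0 < sn by rewrite lt0r snn0.
set beta := sg / sE * (tau / sn) in hb *.
set alpha := sn / sE.
have hbeta : beta * sE * sn = sg * tau.
  by rewrite /beta; field; rewrite snn0 sEn0.
have sgtau : 0 < sg * tau by rewrite -hbeta; apply: mulr_gt0 => //; apply: mulr_gt0.
have sgp : 0 < sg by nra.
have taup : 0 < tau by nra.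
have hal : alpha * sE = sn by rewrite /alpha; field; rewrite sEn0.
have snE : sn <= sE by nra.
have al1 : alpha <= 1 by rewrite /alpha ler_pdivrMr // mul1r.
have al0 : 0 <= alpha by rewrite /alpha divr_ge0.
rewrite /psi; set s := t / beta.
have s0 : 0 <= s by rewrite /s divr_ge0 // ltW.
have hs_t : s * beta = t by rewrite /s divfK // gt_eqF.
case: ifP => hs.
  have [F [hFT hFQ hFN hf2 hEF]] : exists F : 'M[R]_n, [/\ F^T = F,
      Q *m F *m Q = 0, ip F N = 0, 0 < ip F F &
      ip E F = Num.sqrt e2 * Num.sqrt (ip F F)].
    case: (eqVneq e2 0) => he2.
      exists G; split => //.
        by rewrite /G ip_outer (ipa0 hu1 hu) mulr_gt0.
      have ET0 : ET = 0 by apply: ip_eq0.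
      by rewrite eE ET0 sub0r ipNl ipC ipGN oppr0 he2 sqrtr0 mul0r.
    exists ET; split => //.
      by rewrite lt0r he2 e20.
    by rewrite -expr2 sqr_sqrtr // eE ipBl ipC ipETN subr0.
  set f2 := ip F F in hf2 hEF *.
  have s1 : s <= 1 by rewrite (le_trans _ al1) // hs.
  have c0 : 0 <= 1 - s ^+ 2 by nra.
  set c := Num.sqrt (1 - s ^+ 2).
  have c2 : c ^+ 2 = 1 - s ^+ 2 by rewrite sqr_sqrtr.
  set sf := Num.sqrt f2 in hEF *.
  have sf2 : sf ^+ 2 = f2 by rewrite sqr_sqrtr // ltW.
  have sfp : 0 < sf by rewrite sqrtr_gt0.
  set se := Num.sqrt e2 in hEF *.
  have se2 : se ^+ 2 = e2 by rewrite sqr_sqrtr.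
  have se0 : 0 <= se by exact: sqrtr_ge0.
  set a := c / sf; set q := s / sn.
  have q0 : 0 <= q by rewrite divr_ge0.
  have hTT : (a *: F)^T = a *: F by rewrite linearZ /= hFT.
  have hTQ : Q *m (a *: F) *m Q = 0.
    by rewrite -scalemxAr -scalemxAl hFQ scaler0.
  rewrite eQ in hTQ.
  have h := reach (Z := Z) hp hJ hu1 hu (t := t) (dl := 0) q0 hTT hTQ.
  move: h; cbv zeta; rewrite -eQ -/Zp -/N -/G -/E.
  have eD : a *: F - (q *: N + 0 ^+ 2 *: G) = a *: F - q *: N.
    by rewrite expr2 mulr0 scale0r addr0.
  rewrite eD.
  have iDD : ip (a *: F - q *: N) (a *: F - q *: N) = 1.
    rewrite ipBl !ipBr !ipZl !ipZr hFN ipC hFN -/f2 -/n2 -sf2 -sn2 /a /q.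
    rewrite !mulr0 !subr0 sub0r opprK.
    have -> : 1 = c ^+ 2 + s ^+ 2 by rewrite c2 subrK.
    field; by rewrite snn0 gt_eqF.
  rewrite iDD sqrtr1 mulr1.
  have iEN : ip E N = - n2 by rewrite eE ipBl ipETN sub0r.
  have iED : ip E (a *: F - q *: N) = c * se + s * sn.
    rewrite ipBr !ipZr hEF iEN /a /q -sn2.
    field; by rewrite snn0 gt_eqF.
  rewrite iED.
  have hsq : Num.sqrt (1 - alpha ^+ 2) = se / sE.
    have -> : 1 - alpha ^+ 2 = (se / sE) ^+ 2.
      rewrite /alpha; apply: (mulIf (x := sE ^+ 2)); first by rewrite expf_neq0.
      rewrite mulrBl mul1r !expr_div_n !divfK ?expf_neq0 // sE2 se2 sn2 hE2.
      ring.
    by rewrite sqrtr_sqr ger0_norm // divr_ge0.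
  have psi_eq : s * alpha + c * Num.sqrt (1 - alpha ^+ 2) = (c * se + s * sn) / sE.
    by rewrite hsq /alpha; field; rewrite sEn0.
  rewrite psi_eq; apply.
    by apply/eqP => h0; move: iDD; rewrite h0 ip0l => /eqP; rewrite eq_sym oner_eq0.
  by rewrite -/E2 -/sE -/tau -hs_t /q /beta; field; rewrite snn0 sEn0.
have hlt : alpha < s by rewrite ltNge hs.
have hab : alpha * beta < t by rewrite -hs_t ltr_pM2r.
have hE2p : 0 < E2 by rewrite -sE2 exprn_gt0.
have key : sg * tau < t * E2.
  have e1 : alpha * beta * E2 = sg * tau by rewrite -sE2 -hbeta -hal; ring.
  by rewrite -e1 ltr_pM2r.
set dl := Num.sqrt ((t * E2 - sg * tau) / (2 * sg ^+ 2)).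
have dl2 : dl ^+ 2 = (t * E2 - sg * tau) / (2 * sg ^+ 2).
  rewrite sqr_sqrtr // divr_ge0 // ?subr_ge0 ?ltW //; nra.
have hTT : (ET + dl ^+ 2 *: G)^T = ET + dl ^+ 2 *: G.
  by rewrite linearD linearZ /= ETT GT.
have hTQ : Q *m (ET + dl ^+ 2 *: G) *m Q = 0.
  by rewrite mulmxDr mulmxDl -scalemxAr -scalemxAl QETQ QGQ scaler0 addr0.
rewrite eQ in hTQ.
have h := reach (Z := Z) hp hJ hu1 hu (t := t) (dl := dl) ler01 hTT hTQ.
move: h; cbv zeta; rewrite -eQ -/Zp -/N -/G -/E.
have eD : ET + dl ^+ 2 *: G - (1 *: N + dl ^+ 2 *: G) = E.
  by rewrite scale1r /ET opprD addrACA addrK subrr addr0.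
rewrite eD -/E2 -/sE -/tau.
have c1 : E2 / (sE * sE) = 1 by rewrite -expr2 sE2 divff // gt_eqF.
rewrite c1; apply.
  by rewrite /E subr_eq0.
rewrite dl2 -sE2; field.
by rewrite sEn0 gt_eqF.
Qed.
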